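(* Let $V \subset \mathbb{R}^2$ be a finite point set in general position and $m$ a positive integer. Then $\mathcal{H}(V,\mathcal{R}_{\rm NW},m)$ admits a $2$-shallow hitting set $X$ whose points $x_1,\ldots,x_n$ have decreasing $x$-coordinates and decreasing $y$-coordinates, and such that (i) $x_1$ is the leftmost point among the $m$ topmost points of $V$; (ii) the hyperedge consisting of the $m$ topmost points of $V$ contains exactly one point of $X$; (iii) for any two consecutive points $x_j, x_{j+1}$, the bottomless rectangle $B_j = \{(x,y) : x(x_{j+1}) \leq x \leq x(x_j),\ y \leq y(x_j)\}$ (top-right corner $x_j$, with $x_{j+1}$ on its left side) satisfies $|B_j \cap V| \geq m+1$; and (iv) for any three consecutive points $x_j,x_{j+1},x_{j+2}$, the axis-aligned rectangle $R_j$ with top-right corner $x_j$ and bottom-left corner $x_{j+2}$ satisfies $|R_j \cap V| \geq m+2$.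
   Context: $\mathcal{R}_{\rm NW} = \{\{(x,y) : x \leq a,\ y \geq b\} : a,b \in \mathbb{R}\}$ is the family of north-west quadrants. $\mathcal{H}(V,\mathcal{R},m)$ is the hypergraph on $V$ whose hyperedges are the sets $V \cap R$, $R \in \mathcal{R}$, of size exactly $m$. General position: pairwise distinct $x$-coordinates, $y$-coordinates and values $x+y$. For a point $p$, $x(p)$ and $y(p)$ are its coordinates. A set $X \subseteq V$ is a $t$-shallow hitting set of a hypergraph on $V$ if every hyperedge contains at least one and at most $t$ points of $X$. *)

(* Defs.v *)
From mathcomp Require Import all_boot all_order all_algebra.
Set Implicit Arguments. Unset Strict Implicit. Unset Printing Implicit Defensive.
Import Order.TTheory GRing.Theory Num.Theory.
Local Open Scope ring_scope.

Definition pt (R : realFieldType) := (R * R)%type.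

Definition general_position (R : realFieldType) (V : seq (pt R)) : Prop :=
  forall p q, p \in V -> q \in V -> p != q ->
    [/\ p.1 != q.1, p.2 != q.2 & p.1 + p.2 != q.1 + q.2].

Definition inNW (R : realFieldType) (a b : R) (p : pt R) : bool :=
  (p.1 <= a) && (b <= p.2).

Definition NW_hyperedge (R : realFieldType) (V : seq (pt R)) (m : nat)
    (E : pred (pt R)) : Prop :=
  exists a b, (forall p, E p = (p \in V) && inNW a b p) /\ count E V = m.

Definition shallow_hitting_set (R : realFieldType) (V : seq (pt R)) (m t : nat)
    (X : seq (pt R)) : Prop :=
  [/\ uniq X, {subset X <= V} &
      forall E, NW_hyperedge V m E -> (1 <= count E X <= t)%N].

Definition topmost (R : realFieldType) (V : seq (pt R)) (m : nat) (p : pt R) : bool :=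
  (p \in V) && (Order.lt (count (fun q : pt R => p.2 < q.2) V) m).

Definition inB (R : realFieldType) (p q : pt R) (z : pt R) : bool :=
  [&& q.1 <= z.1, z.1 <= p.1 & z.2 <= p.2].

Definition inRect (R : realFieldType) (p r : pt R) (z : pt R) : bool :=
  [&& r.1 <= z.1, z.1 <= p.1, r.2 <= z.2 & z.2 <= p.2].

(* Main.v *)
Require Import Defs.
From mathcomp Require Import all_boot all_order all_algebra.
From mathcomp Require Import zify.
Import Order.TTheory GRing.Theory Num.Theory.
Local Open Scope ring_scope.

Lemma count_in_le (T : eqType) (a b : pred T) (s : seq T) :
  (forall y, y \in s -> a y -> b y) -> (count a s <= count b s)%N.
Proof.
elim: s => //= y s IH H.
apply: leq_add.
  have := H y (mem_head y s); case: (a y) => //= -> //.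
apply: IH => z zs; apply: H; by rewrite in_cons zs orbT.
Qed.

Lemma count_in_lt (T : eqType) (a b : pred T) (s : seq T) x :
  (forall y, y \in s -> a y -> b y) -> x \in s -> b x -> ~~ a x ->
  (count a s < count b s)%N.
Proof.
elim: s => // y s IH H; rewrite in_cons => /orP [/eqP <-|xs] bx ax /=.
  rewrite (negbTE ax) bx add0n add1n ltnS; apply: count_in_le => z zs.
  by apply: H; rewrite in_cons zs orbT.
rewrite -addnS; apply: leq_add.
  have := H y (mem_head y s); case: (a y) => //= -> //.
apply: IH => // z zs; apply: H; by rewrite in_cons zs orbT.
Qed.

Section Proof.
Local Set Implicit Arguments.
Local Unset Strict Implicit.
Variable R : realFieldType.
Variable V : seq (pt R).
Variable m : nat.
Hypothesis uV : uniq V.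
Hypothesis gpV : general_position V.
Hypothesis m0 : (0 < m)%N.

Definition ltc (c : option R) (p : pt R) : bool :=
  if c is Some a then p.1 < a else true.
Definition rank c (t : pt R) := count (fun w => ltc c w && (t.2 < w.2)) V.
Definition Tp c t := ltc c t && (rank c t < m)%N.
Definition is_next c v :=
  [/\ v \in V, Tp c v & forall t, t \in V -> Tp c t -> v.1 <= t.1].

Lemma ltc_trans c v p : ltc c v -> p.1 < v.1 -> ltc c p.
Proof. case: c => //= a; move=> h1 h2; exact: lt_trans h2 h1. Qed.

Lemma rank_W (W : seq (pt R)) k : uniq W ->
  {in W &, forall p q, p != q -> p.2 != q.2} -> (k <= size W)%N ->
  (k <= count (fun t => count (fun w => (t.2 < w.2)%R) W < k)%N W)%N.
Proof.
move=> uW gW kW.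
pose f := fun t : pt R => count (fun w => t.2 < w.2) W.
have flt: forall t t', t \in W -> t' \in W -> t.2 < t'.2 -> (f t' < f t)%N.
  move=> t t' tW t'W lt; apply: (@count_in_lt _ _ _ _ t') => //.
  - move=> y _ /=; exact: lt_trans.
  - by rewrite /= ltxx.
have finj: {in W &, injective f}.
  move=> t t' tW t'W eqf; apply/eqP; apply/negPn/negP => ne.
  have := gW _ _ tW t'W ne; rewrite neq_lt => /orP [lt|lt].
  - by have := flt _ _ tW t'W lt; rewrite eqf ltnn.
  - by have := flt _ _ t'W tW lt; rewrite eqf ltnn.
have fn: forall t, t \in W -> (f t < size W)%N.
  move=> t tW; rewrite -count_predT; apply: (@count_in_lt _ _ _ _ t) => //.
  by rewrite /= ltxx.
have uS: uniq (map f W) by rewrite map_inj_in_uniq.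
have sub: {subset map f W <= iota 0 (size W)}.
  by move=> i /mapP [t tW ->]; rewrite mem_iota add0n fn.
have szS : (size (iota 0 (size W)) <= size (map f W))%N.
  by rewrite size_iota size_map.
have [_ eqS] := uniq_min_size uS sub szS.
have pS : perm_eq (map f W) (iota 0 (size W)).
  by apply: uniq_perm => //; exact: iota_uniq.
have -> : count (fun t => (count (fun w => (t.2 < w.2)%R) W < k)%N) W
          = count (fun i => (i < k)%N) (map f W) by rewrite count_map.
rewrite (permP pS) -(subnKC kW) iotaD count_cat.
have -> : count (fun i => (i < k)%N) (iota 0 k) = k.
  rewrite (eq_in_count (a2 := predT)) ?count_predT ?size_iota // => i.
  by rewrite mem_iota.
by rewrite leq_addr.
Qed.

Lemma rank_count c : (m <= count (ltc c) V)%N -> (m <= count (Tp c) V)%N.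
Proof.
move=> H.
have -> : count (Tp c) V =
  count (fun t => (count (fun w => (t.2 < w.2)%R) (filter (ltc c) V) < m)%N)
        (filter (ltc c) V).
  rewrite count_filter; apply: eq_count => t /=.
  rewrite count_filter andbC /Tp /rank; congr (_ && (_ < _)%N).
  by apply: eq_count => w /=; rewrite andbC.
apply: rank_W.
- exact: filter_uniq.
- move=> p q; rewrite !mem_filter => /andP[_ pV] /andP[_ qV] ne.
  by case: (gpV pV qV ne).
- by rewrite size_filter.
Qed.

Lemma F2 c v w t : is_next c v -> w \in V -> ltc c w -> w.1 < v.1 ->
  t \in V -> Tp c t -> w.2 < t.2.
Proof.
case=> vV Tv vmin wV cw wv tV Tt.
have nTw : ~~ Tp c w by apply/negP => /(vmin _ wV); rewrite leNgt wv.
rewrite ltNge; apply/negP => tw.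
move: nTw; rewrite /Tp cw /= -leqNgt => mw.
case/andP: Tt => _ rt.
have h : (rank c w <= rank c t)%N.
  apply: sub_count => z /= /andP[-> wz] /=; exact: le_lt_trans tw wz.
by rewrite ltnNge (leq_trans mw h) in rt.
Qed.

Lemma argmin (s : seq (pt R)) : s != [::] ->
  exists2 v, v \in s & forall t, t \in s -> v.1 <= t.1.
Proof.
elim: s => // a s IH _.
case: s IH => [|b s] IH.
  exists a; first exact: mem_head.
  by move=> t; rewrite inE => /eqP ->.
have [v vs vmin] := IH isT.
case: (leP a.1 v.1) => h.
  exists a; first exact: mem_head.
  move=> t; rewrite in_cons => /orP[/eqP->//|ts]; exact: le_trans h (vmin t ts).
exists v; first by rewrite in_cons vs orbT.
move=> t; rewrite in_cons => /orP [/eqP->|ts]; [exact: ltW | exact: vmin].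
Qed.

Inductive chain : option R -> seq (pt R) -> Prop :=
| chain_nil c : (count (ltc c) V < m)%N -> chain c [::]
| chain_cons c v X : is_next c v -> (m <= count (ltc c) V)%N ->
    chain (Some v.1) X -> chain c (v :: X).

Lemma chainE c v X : chain c (v :: X) ->
  [/\ is_next c v, (m <= count (ltc c) V)%N & chain (Some v.1) X].
Proof. by move=> H; inversion H. Qed.

Lemma chain_all c X : chain c X -> forall z, z \in X -> z \in V /\ ltc c z.
Proof.
move=> cX0; elim: cX0 => {c X} // c' v X [vV Tv _] _ _ IH z; rewrite in_cons => /orP [/eqP->|zX].
  by split => //; case/andP: Tv.
have [zV lz] := IH z zX; split => //.
by case/andP: Tv => cv _; apply: ltc_trans cv lz.
Qed.

Lemma chain_exists n c : (count (ltc c) V <= n)%N -> exists X, chain c X.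
Proof.
elim: n c => [|n IH] c H; case: (ltnP (count (ltc c) V) m) => Hm.
- by exists [::]; constructor.
- by have := leq_trans Hm H; rewrite leqn0 => /eqP m00; have := m0; rewrite m00.
- by exists [::]; constructor.
have HT := rank_count Hm.
have : filter (Tp c) V != [::].
  by rewrite -size_eq0 size_filter -lt0n (leq_trans m0 HT).
case/argmin => v; rewrite mem_filter => /andP [Tv vV] vmin.
have nv : is_next c v.
  split => // t tV Tt; apply: vmin; by rewrite mem_filter Tt tV.
have cv : ltc c v by case/andP: Tv.
have lt : (count (ltc (Some v.1)) V < count (ltc c) V)%N.
  apply: (@count_in_lt _ _ _ _ v) => //=; last by rewrite ltxx.
  move=> y _ /= yv; exact: ltc_trans cv yv.
have [X cX] := IH (Some v.1) (leq_trans lt H).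
by exists (v :: X); constructor.
Qed.

Lemma iii_loc c v u : is_next c v -> is_next (Some v.1) u ->
  (m <= count (ltc (Some v.1)) V)%N -> (m.+1 <= count (inB v u) V)%N.
Proof.
move=> nv nu Hm.
have HT := rank_count Hm.
have [vV Tv _] := nv; have cv : ltc c v by case/andP: Tv.
have [uIn Tu umin] := nu; have uv : u.1 < v.1 by case/andP: Tu.
apply: leq_ltn_trans HT _; apply: (@count_in_lt _ _ _ _ v) => //.
- move=> t tV Tt; have tv : t.1 < v.1 by case/andP: Tt.
  rewrite /inB (umin t tV Tt) (ltW tv) /=.
  exact: ltW (F2 nv tV (ltc_trans cv tv) tv vV Tv).
- by rewrite /inB (ltW uv) !lexx.
- by rewrite /Tp /= ltxx.
Qed.

Lemma iv_loc c v u w : is_next c v -> is_next (Some v.1) u ->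
  is_next (Some u.1) w ->
  (m <= count (ltc (Some v.1)) V)%N -> (m.+2 <= count (inRect v w) V)%N.
Proof.
move=> nv nu nw Hm.
have HT := rank_count Hm.
have [vV Tv _] := nv; have cv : ltc c v by case/andP: Tv.
have [uIn Tu umin] := nu; have uv : u.1 < v.1 by case/andP: Tu.
have [wV Tw wmin] := nw; have wu : w.1 < u.1 by case/andP: Tw.
have wv : w.1 < v.1 := lt_trans wu uv.
have wv2 : w.2 < v.2 := F2 nv wV (ltc_trans cv wv) wv vV Tv.
have T'w : ~~ Tp (Some v.1) w.
  by apply/negP => /(umin _ wV); rewrite leNgt wu.
apply: (@leq_trans (count (Tp (Some v.1)) V).+2); first by rewrite !ltnS.
apply: (@leq_trans (count (predU (Tp (Some v.1)) (pred1 v)) V).+1).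
  rewrite ltnS; apply: (@count_in_lt _ _ _ _ v) => //=.
  - by move=> y _ ->.
  - by rewrite eqxx orbT.
  - by rewrite /Tp /= ltxx.
apply: (@count_in_lt _ _ _ _ w) => //=.
- move=> t tV /orP [Tt|/eqP ->].
  + have tv : t.1 < v.1 by case/andP: Tt.
    rewrite /inRect (ltW tv) (ltW (lt_le_trans wu (umin t tV Tt))) /=.
    rewrite (ltW (F2 nu wV wv wu tV Tt)) /=.
    exact: ltW (F2 nv tV (ltc_trans cv tv) tv vV Tv).
  + by rewrite /inRect (ltW wv) (ltW wv2) !lexx.
- by rewrite /inRect (ltW wv) (ltW wv2) !lexx.
- rewrite negb_or T'w /=; apply/eqP => ewv; by rewrite ewv ltxx in wv.
Qed.

Lemma chain_iii c X : chain c X -> forall j, (j.+1 < size X)%N ->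
  (m.+1 <= count (inB (nth (0%R : R, 0%R : R) X j) (nth (0%R : R, 0%R : R) X j.+1)) V)%N.
Proof.
move=> cX0; elim: cX0 => {c X} // c' v X nv Hm cX IH [|j] /= hj.
  case: X cX IH hj => // u X cX _ _ /=.
  have [nu Hm' _] := chainE cX; exact: iii_loc nv nu Hm'.
exact: IH.
Qed.

Lemma chain_iv c X : chain c X -> forall j, (j.+2 < size X)%N ->
  (m.+2 <= count (inRect (nth (0%R : R, 0%R : R) X j) (nth (0%R : R, 0%R : R) X j.+2)) V)%N.
Proof.
move=> cX0; elim: cX0 => {c X} // c' v X nv Hm cX IH [|j] /= hj.
  case: X cX IH hj => // u [|w X] // cX _ _ /=.
  have [nu Hm' cX'] := chainE cX; have [nw _ _] := chainE cX'.
  exact: iv_loc nv nu nw Hm'.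
exact: IH.
Qed.

Lemma chain_hit c X a b (E : pred (pt R)) : chain c X ->
  (forall p, E p = (p \in V) && inNW a b p) -> count E V = m ->
  (forall p, p \in V -> p.1 <= a -> ltc c p) -> has E X.
Proof.
move=> cX; elim: cX => {c X} [c' Hc|c' v X nv Hm cX IH] HE HEm Ha.
  have : (count E V <= count (ltc c') V)%N.
    apply: count_in_le => y yV; rewrite HE => /andP[_ /andP[ya _]].
    exact: Ha.
  by rewrite HEm leqNgt Hc.
rewrite /=; case: (leP v.1 a) => va.
  apply/orP; left; rewrite HE; case: nv => vV Tv _.
  rewrite vV /inNW va /= leNgt; apply/negP => vb.
  case/andP: Tv => _ rv.
  have : (count E V <= rank c' v)%N.
    apply: count_in_le => y yV; rewrite HE => /andP[_ /andP[ya yb]].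
    by rewrite (Ha y yV ya) (lt_le_trans vb yb).
  by rewrite HEm leqNgt rv.
apply/orP; right; apply: IH => // p pV pa; exact: le_lt_trans pa va.
Qed.

Lemma chain_shallow c X a b (E : pred (pt R)) : chain c X ->
  (forall p, E p = (p \in V) && inNW a b p) -> count E V = m ->
  (count E X <= 2)%N.
Proof.
move=> cX HE HEm; elim: cX => {c X} // c' v X nv Hm cX IH /=.
case Ev: (E v); last by rewrite add0n.
case: X cX IH => [|u X] cX IH /=; first by rewrite addn0.
have [nu Hm' cX'] := chainE cX.
suff -> : count E X = 0%N by rewrite addn0; case: (E u).
apply/eqP; rewrite eqn0Ngt -has_count; apply/hasPn => z zX.
clear cX IH; case: X cX' zX => // w X cX' zX.
have [nw Hm'' cX''] := chainE cX'.
have [zV zl] := chain_all cX' zX.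
have [wV Tw _] := nw.
have zw : z.2 <= w.2.
  move: zX; rewrite in_cons => /orP [/eqP->//|zX'].
  have [_ zlw] := chain_all cX'' zX'.
  exact: ltW (F2 nw zV zl zlw wV Tw).
apply/negP => Ez.
have h1 := iv_loc nv nu nw Hm'.
have h2 : (count (inRect v w) V <= count E V)%N.
  apply: count_in_le => y yV /and4P [_ yv wy _].
  move: Ev Ez; rewrite !HE yV /inNW /= => /andP[_ /andP[va _]] /andP[_ /andP[_ bz]].
  by rewrite (le_trans yv va) (le_trans bz (le_trans zw wy)).
rewrite HEm in h2; lia.
Qed.

Lemma chain_uniq c X : chain c X -> uniq X.
Proof.
move=> cX0; elim: cX0 => {c X} // c' v X _ _ cX IH /=; rewrite IH andbT.
apply/negP => /(chain_all cX) [_ /=]; by rewrite ltxx.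
Qed.

Lemma chain_sorted1 c X : chain c X -> sorted (fun p q : pt R => q.1 < p.1) X.
Proof.
move=> cX0; elim: cX0 => {c X} // c' v X _ _ cX IH /=.
case: X cX IH => // u X cX IH /=; apply/andP; split => //.
by have [_ /=] := chain_all cX (mem_head u X).
Qed.

Lemma chain_sorted2 c X : chain c X -> sorted (fun p q : pt R => q.2 < p.2) X.
Proof.
move=> cX0; elim: cX0 => {c X} // c' v X nv _ cX IH /=.
case: X cX IH => // u X cX IH /=; apply/andP; split => //.
have [uIn /= uv] := chain_all cX (mem_head u X).
have [vV Tv _] := nv; have cv : ltc c' v by case/andP: Tv.
exact: F2 nv uIn (ltc_trans cv uv) uv vV Tv.
Qed.

Lemma topmostE p : topmost V m p = (p \in V) && Tp None p.
Proof.
by [].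
Qed.

Lemma main_sec : (m <= size V)%N ->
  exists X : seq (pt R),
    let x := fun j : nat => nth (0, 0) X j in
    [/\ shallow_hitting_set V m 2 X,
        X != [::],
        sorted (fun p q : pt R => q.1 < p.1) X,
        sorted (fun p q : pt R => q.2 < p.2) X &
        [/\ topmost V m (x 0%N) /\
                      (forall q, topmost V m q -> (x 0%N).1 <= q.1),
            count (topmost V m) X = 1%N,
            (forall j, (j.+1 < size X)%N ->
                          (m.+1 <= count (inB (x j) (x j.+1)) V)%N) &
            (forall j, (j.+2 < size X)%N ->
                          (m.+2 <= count (inRect (x j) (x j.+2)) V)%N)]].
Proof.
move=> mV.
have [X cX] := @chain_exists (size V) None (count_size _ _).
have cNV : count (ltc None) V = size V by rewrite -count_predT.
case: X cX => [|v X'] cX.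
  by inversion cX; rewrite cNV ltnNge mV in H.
exists (v :: X'); cbv zeta.
have [nv _ cX'] := chainE cX.
split.
- split; first exact: chain_uniq cX.
  + by move=> z /(chain_all cX) [].
  + move=> E [a [b [HE HEm]]].
    rewrite (chain_shallow cX HE HEm) andbT -has_count.
    exact: (chain_hit cX HE HEm).
- by [].
- exact: chain_sorted1 cX.
- exact: chain_sorted2 cX.
split.
- have [vV Tv vmin] := nv.
  split; first by rewrite topmostE vV Tv.
  by move=> q; rewrite topmostE => /andP [qV Tq]; apply: vmin.
- have [vV Tv vmin] := nv.
  rewrite /= topmostE vV Tv add1n; congr (_.+1).
  apply/eqP; rewrite eqn0Ngt -has_count; apply/hasPn => z zX.
  rewrite topmostE; apply/negP => /andP [zV Tz].
  have [_ /= zv] := chain_all cX' zX.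
  by have := vmin z zV Tz; rewrite leNgt zv.
- exact: chain_iii cX.
- exact: chain_iv cX.
Qed.

End Proof.

Theorem lemma14 (R : realFieldType) (V : seq (pt R)) (m : nat) :
  uniq V -> general_position V -> (0 < m)%N -> (m <= size V)%N ->
  exists X : seq (pt R),
    let x := fun j : nat => nth (0, 0) X j in
    [/\ shallow_hitting_set V m 2 X,
        X != [::],
        sorted (fun p q : pt R => q.1 < p.1) X,
        sorted (fun p q : pt R => q.2 < p.2) X &
        [/\ (* (i) *) topmost V m (x 0%N) /\
                      (forall q, topmost V m q -> (x 0%N).1 <= q.1),
            (* (ii) *) count (topmost V m) X = 1%N,
            (* (iii) *) (forall j, (j.+1 < size X)%N ->
                          (m.+1 <= count (inB (x j) (x j.+1)) V)%N) &
            (* (iv) *) (forall j, (j.+2 < size X)%N ->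
                          (m.+2 <= count (inRect (x j) (x j.+2)) V)%N)]].
Proof. move=> uV gpV m0; exact: main_sec. Qed.
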